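(* Let $\mathfrak g$ be a nonsemisimple complex Lie algebra, $\mathfrak p$ a nonperfect ideal of $\mathfrak g$, and $\phi:\mathfrak p\to\mathbb C$ a Lie algebra homomorphism. Then $\phi$ is extendable if and only if $[\mathfrak g^{\phi},\mathfrak g^{\phi}]\cap\mathfrak p\subseteq\ker\phi$.
   Context: A Lie algebra homomorphism to $\mathbb C$ is a linear map vanishing on the derived subalgebra. The Whittaker annihilator is $\mathfrak g^{\phi}=\{g\in\mathfrak g:\phi([g,p])=0\ \forall p\in\mathfrak p\}$, a subalgebra of $\mathfrak g$ containing $\mathfrak p$. $\phi$ is called extendable if there exists a Lie algebra homomorphism $\phi':\mathfrak g^\phi\to\mathbb C$ with $\phi'|_{\mathfrak p}=\phi$. *)

(* Defs.v *)
From HB Require Import structures.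
From mathcomp Require Import all_boot all_order all_algebra.
From mathcomp Require Import complex.
From mathcomp Require Import Rstruct.
Set Implicit Arguments. Unset Strict Implicit. Unset Printing Implicit Defensive.
Import Order.TTheory GRing.Theory Num.Theory.
Local Open Scope ring_scope.

Definition CC : fieldType := complex Rdefinitions.R.

Section Lie.
Variable V : vectType CC.
Variable br : V -> V -> V.

Definition lie_algebra : Prop :=
  [/\ (forall a x y z, br (a *: x + y) z = a *: br x z + br y z),
      (forall a x y z, br z (a *: x + y) = a *: br z x + br z y),
      (forall x, br x x = 0) &
      (forall x y z, br x (br y z) + br y (br z x) + br z (br x y) = 0)].

Definition in_bracket (A B : V -> Prop) (v : V) : Prop :=
  exists s : seq (CC * V * V),
    (forall t, t \in s -> A t.1.2 /\ B t.2) /\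
    v = \sum_(t <- s) t.1.1 *: br t.1.2 t.2.

Definition is_ideal (I : {vspace V}) : Prop :=
  forall g x, x \in I -> br g x \in I.

Fixpoint derived (I : {vspace V}) (k : nat) : V -> Prop :=
  match k with
  | 0 => fun v => v \in I
  | k'.+1 => in_bracket (derived I k') (derived I k')
  end.

Definition solvable_ideal (I : {vspace V}) : Prop :=
  exists k, forall v, derived I k v -> v = 0.

Definition semisimple : Prop :=
  forall I : {vspace V}, is_ideal I -> solvable_ideal I -> I = 0%VS.

Definition perfect (P : {vspace V}) : Prop :=
  forall v, v \in P <-> in_bracket (fun x => x \in P) (fun x => x \in P) v.

(* a Lie algebra homomorphism D -> C, D a subalgebra given as a predicate:
   a linear map on D vanishing on the brackets of elements of D
   (values of f outside D are irrelevant) *)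
Definition lie_hom_on (D : V -> Prop) (f : V -> CC) : Prop :=
  (forall a x y, D x -> D y -> f (a *: x + y) = a * f x + f y) /\
  (forall x y, D x -> D y -> f (br x y) = 0).

Definition whittaker_ann (P : {vspace V}) (phi : V -> CC) (g : V) : Prop :=
  forall p, p \in P -> phi (br g p) = 0.

Definition extendable (P : {vspace V}) (phi : V -> CC) : Prop :=
  exists phi' : V -> CC,
    lie_hom_on (whittaker_ann P phi) phi' /\
    (forall x, x \in P -> phi' x = phi x).

End Lie.

(* Main.v *)
Require Import Defs.
From HB Require Import structures.
From mathcomp Require Import all_boot all_order all_algebra.
From Stdlib Require Import Classical.
From mathcomp Require Import zify.
Set Implicit Arguments. Unset Strict Implicit. Unset Printing Implicit Defensive.
Import GRing.Theory.
Local Open Scope ring_scope.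

Section Aux.
Variable V : vectType CC.

Lemma span_pred (S : V -> Prop) :
  S 0 -> (forall a x y, S x -> S y -> S (a *: x + y)) ->
  exists U : {vspace V}, forall x, x \in U <-> S x.
Proof.
move=> S0 Slin.
suff H : forall k (U : {vspace V}), (forall x, x \in U -> S x) ->
   (\dim (fullv : {vspace V}) - \dim U <= k)%N ->
   exists U' : {vspace V}, (forall x, x \in U' -> S x) /\ (forall x, S x -> x \in U').
  have Q0 : forall x, x \in (0%VS : {vspace V}) -> S x.
    by move=> x; rewrite memv0 => /eqP ->.
  have [U' [H1 H2]] := H (\dim (fullv : {vspace V})) 0%VS Q0 (leq_subr _ _).
  by exists U' => x; split; [apply: H1 | apply: H2].
elim=> [|k IH] U QU hk.
  exists U; split => // x Sx; apply: NNPP => nx.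
  have sub : (U <= U + <[x]>)%VS by apply: addvSl.
  have := dimv_leqif_eq sub => [[le eqU]].
  have xU' : x \in (U + <[x]>)%VS := (subvP (addvSr U _) _ (memv_line x)).
  have neq : U != (U + <[x]>)%VS by apply/eqP => E; apply: nx; rewrite E.
  have lt : (\dim U < \dim (U + <[x]>)%VS)%N by rewrite ltn_neqAle le eqU neq.
  have := dimvS (subvf (U + <[x]>)%VS).
  move: hk; rewrite leqn0 subn_eq0 => hk le2.
  by have := leq_trans lt (leq_trans le2 hk); rewrite ltnn.
case: (classic (forall x, S x -> x \in U)) => [all|nall].
  by exists U.
have [x] := not_all_ex_not _ _ nall.
move=> hx; have [Sx nx] := imply_to_and _ _ hx.
apply: (IH (U + <[x]>)%VS).
  move=> v /memv_addP [u uU [w /vlineP [c ->] ->]].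
  by rewrite addrC; apply: Slin => //; apply: QU.
have sub : (U <= U + <[x]>)%VS by apply: addvSl.
have := dimv_leqif_eq sub => [[le eqU]].
have xU' : x \in (U + <[x]>)%VS := (subvP (addvSr U _) _ (memv_line x)).
have neq : U != (U + <[x]>)%VS by apply/eqP => E; apply: nx; rewrite E.
have lt : (\dim U < \dim (U + <[x]>)%VS)%N by rewrite ltn_neqAle le eqU neq.
have := dimvS (subvf (U + <[x]>)%VS).
move: hk lt; set d := \dim _; set a := \dim U; set b := \dim _.
move=> hk lt le2. 
clearbody d a b; lia.
Qed.


Variable br : V -> V -> V.
Hypothesis hL : lie_algebra br.
Variable P : {vspace V}.
Hypothesis hI : is_ideal br P.
Variable phi : V -> CC.
Hypothesis hphi : lie_hom_on br (fun x => x \in P) phi.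

Let W := whittaker_ann br P phi.

Lemma brDl x y z : br (x + y) z = br x z + br y z.
Proof. by case: hL => h _ _ _; have := h 1 x y z; rewrite !scale1r. Qed.
Lemma brDr x y z : br z (x + y) = br z x + br z y.
Proof. by case: hL => _ h _ _; have := h 1 x y z; rewrite !scale1r. Qed.
Lemma brZl a x z : br (a *: x) z = a *: br x z.
Proof.
case: hL => h _ _ _; have := h a x 0 z.
have : br 0 z = 0.
  have := h 1 0 0 z; rewrite !scale1r !addr0 => E.
  by apply: (addrI (br 0 z)); rewrite addr0 -E.
by move=> ->; rewrite !addr0.
Qed.
Lemma br0l z : br 0 z = 0.
Proof. by have := brZl 0 0 z; rewrite !scale0r. Qed.
Lemma brN x y : br y x = - br x y.
Proof.
case: hL => _ _ hxx _.
have := hxx (x + y); rewrite brDl !brDr !hxx add0r addr0 => /eqP.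
rewrite addr_eq0 => /eqP ->; by rewrite opprK.
Qed.

Lemma phi0 : phi 0 = 0.
Proof.
case: hphi => h _; have := h 1 0 0 (mem0v _) (mem0v _).
rewrite !scale1r addr0 mul1r => E.
by apply: (addrI (phi 0)); rewrite addr0 -E.
Qed.
Lemma phiD x y : x \in P -> y \in P -> phi (x + y) = phi x + phi y.
Proof. by case: hphi => h _ xP yP; have := h 1 x y xP yP; rewrite scale1r mul1r. Qed.
Lemma phiN x : x \in P -> phi (- x) = - phi x.
Proof.
case: hphi => h _ xP; have := h (-1) x 0 xP (mem0v _).
by rewrite addr0 phi0 addr0 scaleN1r mulN1r.
Qed.

Lemma W_lin a x y : W x -> W y -> W (a *: x + y).
Proof.
rewrite /W /whittaker_ann; case: hphi => h _ Wx Wy p pP.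
rewrite brDl brZl h ?Wx ?Wy ?mulr0 ?addr0 //; apply: hI => //.
Qed.

Lemma W_br x y : W x -> W y -> W (br x y).
Proof.
move=> Wx Wy p pP.
case: hL => _ _ _ hJ.
have := hJ x y p.
have Pyp : br y p \in P by apply: hI.
have Ppx : br p x \in P by rewrite brN memvN; apply: hI.
have Pxy : br p (br x y) \in P.
  by rewrite brN memvN; apply: hI.
move=> E.
have P1 : br x (br y p) \in P by apply: hI.
have P2 : br y (br p x) \in P by apply: hI.
have : phi (br x (br y p) + br y (br p x) + br p (br x y)) = 0 by rewrite E phi0.
rewrite phiD ?memvD // phiD //.
have -> : phi (br x (br y p)) = 0 by apply: Wx.
have -> : phi (br y (br p x)) = 0.
  by rewrite (brN x p) /=; apply: Wy; rewrite memvN; apply: hI.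
rewrite !add0r => E2.
by rewrite brN phiN ?E2 ?oppr0.
Qed.

Lemma W0 : W 0.
Proof. by move=> p pP; rewrite br0l phi0. Qed.

Lemma forward : extendable br P phi ->
  forall v, in_bracket br W W v -> v \in P -> phi v = 0.
Proof.
move=> [f [[fl fb] fext]] v [s [hs ->]] vP.
rewrite -fext //.
suff : W (\sum_(t <- s) t.1.1 *: br t.1.2 t.2) /\ f (\sum_(t <- s) t.1.1 *: br t.1.2 t.2) = 0
  by case.
elim: s hs {vP} => [|t s IH] hs.
  by rewrite big_nil; split; [apply: W0 | rewrite fext ?mem0v ?phi0].
rewrite big_cons.
have [Wa Wb] := hs t (mem_head _ _).
have [WS fS] : W (\sum_(t <- s) t.1.1 *: br t.1.2 t.2) /\ f (\sum_(t <- s) t.1.1 *: br t.1.2 t.2) = 0.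
  by apply: IH => u us; apply: hs; rewrite in_cons us orbT.
have Wab := W_br Wa Wb.
split; first by apply: W_lin.
by rewrite fl // fb // fS mulr0 addr0.
Qed.

Lemma K0 : in_bracket br W W 0.
Proof. by exists [::]; split => //; rewrite big_nil. Qed.

Lemma Klin a x y : in_bracket br W W x -> in_bracket br W W y ->
  in_bracket br W W (a *: x + y).
Proof.
move=> [s [hs ->]] [s' [hs' ->]].
exists ([seq (a * t.1.1, t.1.2, t.2) | t <- s] ++ s'); split.
  move=> t; rewrite mem_cat => /orP [/mapP [u us ->] /= | ]; last exact: hs'.
  exact: hs.
rewrite big_cat big_map /= scaler_sumr; congr (_ + _).
by apply: eq_bigr => t _; rewrite scalerA.
Qed.

Lemma backward :
  (forall v, in_bracket br W W v -> v \in P -> phi v = 0) -> extendable br P phi.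
Proof.
move=> H.
have [U hU] := span_pred K0 Klin.
case: hphi => hl hb.
pose f v := phi (addv_pi1 P U v).
exists f; split; [split|].
- move=> a x y _ _; rewrite /f linearD linearZ /= hl ?memv_pi1 //.
- move=> x y Wx Wy; rewrite /f.
  have KU : br x y \in U.
    apply/hU; exists [:: (1, x, y)]; split.
      by move=> t; rewrite inE => /eqP ->; split; [exact: Wx | exact: Wy].
    by rewrite big_seq1 scale1r.
  have PU : br x y \in (P + U)%VS by apply: (subvP (addvSr P U)).
  have := addv_pi1_pi2 PU; rewrite addv_pi2_id // => E.
  have -> : addv_pi1 P U (br x y) = 0.
    by apply: (addIr (br x y)); rewrite add0r.
  exact: phi0.
- move=> x xP; rewrite /f.
  have PU : x \in (P + U)%VS by apply: (subvP (addvSl P U)).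
  have E := addv_pi1_pi2 PU.
  have p2U : addv_pi2 P U x \in U by apply: memv_pi2.
  have p2P : addv_pi2 P U x \in P.
    have -> : addv_pi2 P U x = x - addv_pi1 P U x.
      by rewrite -{2}E addrAC subrr add0r.
    by rewrite memvB ?memv_pi1.
  have h2 : phi (addv_pi2 P U x) = 0 by apply: H => //; apply/hU.
  by have := congr1 phi E; rewrite (phiD (memv_pi1 P U x) p2P) h2 addr0.
Qed.
End Aux.

Theorem proposition3p5 (V : vectType CC) (br : V -> V -> V)
  (P : {vspace V}) (phi : V -> CC) :
  lie_algebra br ->
  ~ semisimple br ->
  is_ideal br P ->
  ~ perfect br P ->
  lie_hom_on br (fun x => x \in P) phi ->
  (extendable br P phi <->
   (forall v, in_bracket br (whittaker_ann br P phi) (whittaker_ann br P phi) v ->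
              v \in P -> phi v = 0)).
Proof.
move=> hL _ hI _ hphi; split.
- exact: forward.
- exact: backward.
Qed.
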